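(* Suppose that $(\tilde{u},\tilde{v})\in\mathbb{R}^2$ and $c>0$, and set \[ u_c = \frac{\tilde{u}}{c},\qquad v_c = \frac{2\ln c+\tilde{v}}{c}. \] Then as $c\to+\infty$ the catenoids $\mathfrak{C}_c$ (parametrized by $X_c$) satisfy \[ \lim_{c\to+\infty} X_c(u_c+iv_c) = \left(-\frac{1}{2\lambda_1}\cos\tilde{u}\,e^{\tilde{v}},\; -\frac{1}{2\lambda_2}\sin\tilde{u}\,e^{\tilde{v}},\; 0\right). \]
   Context: Setting: $\widetilde{E(2)}$ is $\mathbb{R}^3$ with the group law $(x_1,y_1,z_1)*(x_2,y_2,z_2)=(x_1+x_2\cos z_1-y_2\sin z_1,\ y_1+x_2\sin z_1+y_2\cos z_1,\ z_1+z_2)$ and the left-invariant metric $g(\lambda_1,\lambda_2)=\lambda_1^2(\cos z\,dx+\sin z\,dy)^2+\lambda_2^2(-\sin z\,dx+\cos z\,dy)^2+\frac{1}{\lambda_1^2\lambda_2^2}dz^2$, where either $\lambda_1>\lambda_2>0$ or $\lambda_1=\lambda_2=1$. Write coordinates as $(x_1,x_2,x_3)$. Construction of the catenoid $\mathfrak{C}_c$: For $c>0$ and a real $\theta$, put $\theta_c^+=\pi$ if $c>\sqrt2\lambda_1$ and $\theta_c^+=\arccos(1-c^2/\lambda_1^2)$ if $0<c\le\sqrt2\lambda_1$, and take $\theta\in(-\theta_c^+,\theta_c^+)$. Let $\varphi$ solve $\varphi'(u)=\sqrt{c^2+2\cos\theta\, B-D^2B^2}$, $\varphi(0)=0$, where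 $B=\lambda_1^2\cos^2\varphi(u)+\lambda_2^2\sin^2\varphi(u)$ and $D=\sin\theta/c$; let $f$ solve $f'(u)=DB$, $f(0)=0$; let $A=f(u)+cv$; let $G(u)=\int_0^u\frac{c-\varphi'(s)}{B}\,ds$; let $U>0$ be such that $\varphi(U)=\pi$, and let $H(c,\theta)=Df(U)+cG(U)$. It is known that for each $c>0$ there is a unique $\widetilde{\theta_c}\in(0,\pi/2)\cap(0,\theta_c^+)$ with $H(c,\widetilde{\theta_c})=0$, and that $\widetilde{\theta_c}\to\pi/2$ as $c\to+\infty$. The catenoid $\mathfrak{C}_c$ is the image of the conformal minimal immersion $X_c=(x_1,x_2,x_3):\mathbb{C}\to\widetilde{E(2)}$, $z=u+iv$, obtained with $\theta=\widetilde{\theta_c}$ (all of $\varphi,f,B,D,A,G,U$ then depend on $c$), given by $x_3(u+iv)=-\lambda_1\lambda_2Dv+\lambda_1\lambda_2G(u)$, $x_1=-\frac{1}{(c^2+\lambda_1^2\lambda_2^2D^2)B}\Big[\frac{1}{\lambda_1}f'\cos\varphi\,M_1-\frac{1}{\lambda_1}(c-\varphi')\sin\varphi\,M_2-\frac{1}{\lambda_2}(c-\varphi')\cos\varphi\,M_3-\frac{1}{\lambda_2}f'\sin\varphi\,M_4\Big]$, $x_2=-\frac{1}{(c^2+\lambda_1^2\lambda_2^2D^2)B}\Big[\frac{1}{\lambda_1}f'\cos\varphi\,M_4-\frac{1}{\lambda_1}(c-\varphi')\sin\varphi\,M_3+\frac{1}{\lambda_2}(c-\varphi')\cos\varphi\,M_2+\frac{1}{\lambda_2}f'\sin\varphi\,M_1\Big]$,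 where $M_1=c\cos x_3\cosh A-\lambda_1\lambda_2D\sin x_3\sinh A$, $M_2=c\cos x_3\sinh A-\lambda_1\lambda_2D\sin x_3\cosh A$, $M_3=c\sin x_3\sinh A+\lambda_1\lambda_2D\cos x_3\cosh A$, $M_4=c\sin x_3\cosh A+\lambda_1\lambda_2D\cos x_3\sinh A$, and $\varphi,\varphi',f'$ are evaluated at $u$. Its Gauss map is $g(u+iv)=e^{f(u)+cv}e^{i\varphi(u)}$. *)

(* Defs.v *)
From Stdlib Require Import Reals Lra.
From Coquelicot Require Import Coquelicot.
Open Scope R_scope.

Section Catenoid.
Variables (l1 l2 : R).

Definition Bf (ph : R) : R := l1 ^ 2 * (cos ph) ^ 2 + l2 ^ 2 * (sin ph) ^ 2.

Definition Dc (c th : R) : R := sin th / c.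

Definition theta_plus (c : R) : R :=
  if Rlt_dec (sqrt 2 * l1) c then PI else acos (1 - c ^ 2 / l1 ^ 2).

Definition phi_rhs (c th ph : R) : R :=
  sqrt (c ^ 2 + 2 * cos th * Bf ph - (Dc c th) ^ 2 * (Bf ph) ^ 2).

Definition Gf (c th : R) (phi : R -> R) (u : R) : R :=
  RInt (fun s => (c - phi_rhs c th (phi s)) / Bf (phi s)) 0 u.

Definition Hf (c th : R) (phi f : R -> R) (U : R) : R :=
  Dc c th * f U + c * Gf c th phi U.

(* The data (theta, phi, f, U) defining the catenoid C_c:
   theta = theta~_c is characterized as the (known to be unique) element of
   (0, pi/2) /\ (0, theta_c^+) with H(c,theta) = 0. *)
Definition catenoid_data (c th : R) (phi f : R -> R) (U : R) : Prop :=
  0 < th /\ th < PI / 2 /\ th < theta_plus c /\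
  (forall u, is_derive phi u (phi_rhs c th (phi u))) /\ phi 0 = 0 /\
  (forall u, is_derive f u (Dc c th * Bf (phi u))) /\ f 0 = 0 /\
  0 < U /\ phi U = PI /\
  Hf c th phi f U = 0.

(* The immersion X_c = (x1, x2, x3) at z = u + i v *)
Definition X3 (c th : R) (phi : R -> R) (u v : R) : R :=
  - l1 * l2 * Dc c th * v + l1 * l2 * Gf c th phi u.

Definition Af (c : R) (f : R -> R) (u v : R) : R := f u + c * v.

Definition M1 c th phi f u v :=
  let x3 := X3 c th phi u v in let A := Af c f u v in
  c * cos x3 * cosh A - l1 * l2 * Dc c th * sin x3 * sinh A.
Definition M2 c th phi f u v :=
  let x3 := X3 c th phi u v in let A := Af c f u v in
  c * cos x3 * sinh A - l1 * l2 * Dc c th * sin x3 * cosh A.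
Definition M3 c th phi f u v :=
  let x3 := X3 c th phi u v in let A := Af c f u v in
  c * sin x3 * sinh A + l1 * l2 * Dc c th * cos x3 * cosh A.
Definition M4 c th phi f u v :=
  let x3 := X3 c th phi u v in let A := Af c f u v in
  c * sin x3 * cosh A + l1 * l2 * Dc c th * cos x3 * sinh A.

Definition X1 (c th : R) (phi f : R -> R) (u v : R) : R :=
  let ph := phi u in let B := Bf ph in let D := Dc c th in
  let dph := phi_rhs c th ph in let df := D * B in
  - / ((c ^ 2 + l1 ^ 2 * l2 ^ 2 * D ^ 2) * B) *
    ( / l1 * df * cos ph * M1 c th phi f u v
    - / l1 * (c - dph) * sin ph * M2 c th phi f u v
    - / l2 * (c - dph) * cos ph * M3 c th phi f u v
    - / l2 * df * sin ph * M4 c th phi f u v).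

Definition X2 (c th : R) (phi f : R -> R) (u v : R) : R :=
  let ph := phi u in let B := Bf ph in let D := Dc c th in
  let dph := phi_rhs c th ph in let df := D * B in
  - / ((c ^ 2 + l1 ^ 2 * l2 ^ 2 * D ^ 2) * B) *
    ( / l1 * df * cos ph * M4 c th phi f u v
    - / l1 * (c - dph) * sin ph * M3 c th phi f u v
    + / l2 * (c - dph) * cos ph * M2 c th phi f u v
    + / l2 * df * sin ph * M1 c th phi f u v).

End Catenoid.

(* Main.v *)
Require Import Defs.
From Stdlib Require Import Reals.
From Coquelicot Require Import Coquelicot.
Open Scope R_scope.
From Stdlib Require Import Lra Psatz.
Lemma sqrt_approx c e : 0 < c -> Rabs (sqrt (c ^ 2 + e) - c) <= Rabs e / c.
Proof.
  intro hc. apply Rle_div_r; [lra|].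
  destruct (Rle_or_lt 0 (c ^ 2 + e)) as [h|h].
  - assert (hs := sqrt_sqrt _ h). assert (hp := sqrt_pos (c^2+e)).
    set (r := sqrt (c ^ 2 + e)) in *.
    assert (he : e = (r - c) * (r + c)) by nra.
    rewrite he, Rabs_mult, (Rabs_pos_eq (r + c)) by lra.
    assert (ha := Rabs_pos (r - c)). nra.
  - rewrite sqrt_neg_0 by lra.
    replace (0 - c) with (- c) by ring. rewrite Rabs_Ropp, Rabs_pos_eq by lra.
    rewrite Rabs_left by nra. nra.
Qed.

Lemma mvt_bound (F dF : R -> R) a b M :
  (forall x, is_derive F x (dF x)) -> (forall x, Rabs (dF x) <= M) ->
  Rabs (F b - F a) <= M * Rabs (b - a).
Proof.
  intros hd hb.
  destruct (MVT_gen F a b dF) as [xi [_ hxi]].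
  - intros; apply hd.
  - intros x _. apply continuity_pt_filterlim. apply (@ex_derive_continuous R_AbsRing R_NormedModule).
    eexists; apply hd.
  - rewrite hxi, Rabs_mult. apply Rmult_le_compat_r; [apply Rabs_pos| apply hb].
Qed.

Lemma mvt_neg (F dF : R -> R) a b :
  (forall x, is_derive F x (dF x)) -> (forall x, dF x < 0) -> a < b -> F b < F a.
Proof.
  intros hd hb hab.
  destruct (MVT_gen F a b dF) as [xi [_ hxi]].
  - intros; apply hd.
  - intros x _. apply continuity_pt_filterlim. apply (@ex_derive_continuous R_AbsRing R_NormedModule).
    eexists; apply hd.
  - specialize (hb xi). nra.
Qed.

Lemma Bf_bounds l1 l2 y : 0 < l2 <= l1 -> l2 ^ 2 <= Bf l1 l2 y <= l1 ^ 2.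
Proof.
  intros h. unfold Bf. assert (hsc := sin2_cos2 y). unfold Rsqr in hsc.
  assert (0 <= cos y ^ 2) by nra. assert (0 <= sin y ^ 2) by nra.
  assert (l2 ^ 2 <= l1 ^ 2) by nra. nra.
Qed.

Lemma ln_bound c : 1 <= c -> 0 <= ln c < c.
Proof.
  intro h. split.
  - rewrite <- ln_1. apply ln_le; lra.
  - rewrite <- (ln_exp c) at 2. apply ln_increasing; [lra|].
    assert (h2 := exp_ineq1 c). lra.
Qed.
Lemma cont_of_ex_derive f x : ex_derive f x -> continuity_pt f x.
Proof. intro h. apply continuity_pt_filterlim.
  apply (@ex_derive_continuous R_AbsRing R_NormedModule). exact h. Qed.



Lemma cont_k l1 l2 c th y : Bf l1 l2 y <> 0 ->
  continuity_pt (fun y => (c - phi_rhs l1 l2 c th y) / Bf l1 l2 y) y.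
Proof.
  intro hB.
  apply (continuity_pt_div (fun y => c - phi_rhs l1 l2 c th y) (fun y => Bf l1 l2 y)); [|apply cont_of_ex_derive; unfold Bf; auto_derive; auto | exact hB].
  apply (continuity_pt_minus (fun _ => c) (fun y => phi_rhs l1 l2 c th y)).
  - apply continuity_pt_const. intros a b; reflexivity.
  - unfold phi_rhs.
    apply (continuity_pt_comp (fun y => c ^ 2 + 2 * cos th * Bf l1 l2 y - Dc c th ^ 2 * Bf l1 l2 y ^ 2) sqrt).
    + apply cont_of_ex_derive; unfold Bf; auto_derive; auto.
    + apply continuity_pt_filterlim. apply continuous_sqrt.
Qed.

Lemma Bf_pos l1 l2 y : 0 < l2 <= l1 -> 0 < Bf l1 l2 y.
Proof. intro h. assert (h2 := Bf_bounds l1 l2 y h). nra. Qed.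

Lemma G_derive l1 l2 c th phi : 0 < l2 <= l1 -> (forall u, ex_derive phi u) ->
  forall u, is_derive (Gf l1 l2 c th phi) u
    ((c - phi_rhs l1 l2 c th (phi u)) / Bf l1 l2 (phi u)).
Proof.
  intros hl hd u.
  set (g := fun s => (c - phi_rhs l1 l2 c th (phi s)) / Bf l1 l2 (phi s)).
  assert (hg : forall s, continuous g s).
  { intro s. apply continuity_pt_filterlim.
    apply (continuity_pt_comp phi (fun y => (c - phi_rhs l1 l2 c th y) / Bf l1 l2 y)).
    - apply cont_of_ex_derive, hd.
    - apply cont_k. apply Rgt_not_eq, Bf_pos, hl. }
  apply (is_derive_RInt g (Gf l1 l2 c th phi) 0 u).
  - apply filter_forall. intro b. unfold Gf. apply (@RInt_correct R_CompleteNormedModule).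
    apply (@ex_RInt_continuous R_CompleteNormedModule). intros; apply hg.
  - apply hg.
Qed.

Lemma key_ineq c d B l1 cth : 0 < c -> 0 < B <= l1 ^ 2 -> c ^ 2 * d ^ 2 <= 1 ->
  2 * cth * c ^ 6 > 3 * l1 ^ 2 * c ^ 4 + l1 ^ 6 ->
  c ^ 2 * (c ^ 2 + 2 * cth * B - d ^ 2 * B ^ 2) > (c ^ 2 + d ^ 2 * B ^ 2) ^ 2.
Proof.
  intros hc hB hS hcos.
  set (SS := c ^ 2 * d ^ 2).
  assert (hS0 : 0 <= SS) by (unfold SS; nra).
  assert (hS' : SS <= 1) by exact hS.
  assert (hc4 : 0 < c ^ 4) by (apply pow_lt; lra).
  assert (e1 : B * l1 ^ 2 >= B ^ 2) by nra.
  assert (e2 : B * l1 ^ 6 >= B ^ 4).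
  { assert (B ^ 3 <= (l1 ^ 2) ^ 3) by (apply pow_incr; lra). nra. }
  assert (hL : B * (2 * cth * c ^ 6) > 3 * c ^ 4 * B ^ 2 + B ^ 4).
  { assert (B * (2 * cth * c ^ 6) > B * (3 * l1 ^ 2 * c ^ 4 + l1 ^ 6)) by nra. nra. }
  assert (hR : 3 * c ^ 4 * SS * B ^ 2 + SS ^ 2 * B ^ 4 <= 3 * c ^ 4 * B ^ 2 + B ^ 4).
  { assert (0 <= B ^ 2) by (apply pow_le; lra). assert (0 <= B ^ 4) by (apply pow_le; lra).
    assert (SS ^ 2 <= 1).
    { replace (SS ^ 2) with (SS * SS) by ring. nra. }
    assert (3 * c ^ 4 * SS * B ^ 2 <= 3 * c ^ 4 * B ^ 2).
    { assert (0 <= 3 * c ^ 4 * B ^ 2) by nra. nra. }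
    assert (SS ^ 2 * B ^ 4 <= B ^ 4) by nra. lra. }
  assert (goal4 : c ^ 4 * (c ^ 2 * (c ^ 2 + 2 * cth * B - d ^ 2 * B ^ 2) - (c ^ 2 + d ^ 2 * B ^ 2) ^ 2) > 0).
  { replace (c ^ 4 * (c ^ 2 * (c ^ 2 + 2 * cth * B - d ^ 2 * B ^ 2) - (c ^ 2 + d ^ 2 * B ^ 2) ^ 2))
      with (B * (2 * cth * c ^ 6) - (3 * c ^ 4 * SS * B ^ 2 + SS ^ 2 * B ^ 4)) by (unfold SS; ring).
    lra. }
  nra.
Qed.

Lemma cos_bound l1 l2 c th phi f U : 0 < l2 <= l1 -> 0 < c ->
  catenoid_data l1 l2 c th phi f U ->
  2 * cos th * c ^ 6 <= 3 * l1 ^ 2 * c ^ 4 + l1 ^ 6.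
Proof.
  intros hl hc [hth0 [hth1 [hthp [hphi [hphi0 [hf [hf0 [hU [hUpi hH]]]]]]]]].
  destruct (Rle_or_lt (2 * cos th * c ^ 6) (3 * l1 ^ 2 * c ^ 4 + l1 ^ 6)) as [h|h]; [exact h|].
  exfalso.
  assert (hdphi : forall u, ex_derive phi u) by (intro u; eexists; apply hphi).
  set (D := Dc c th).
  assert (hD : c ^ 2 * D ^ 2 <= 1).
  { unfold D, Dc. replace (c ^ 2 * (sin th / c) ^ 2) with (sin th ^ 2) by (field; lra).
    assert (hsc := sin2_cos2 th). unfold Rsqr in hsc. nra. }
  set (g := fun u => (c - phi_rhs l1 l2 c th (phi u)) / Bf l1 l2 (phi u)).
  assert (hh : forall u, is_derive (fun u => D * f u + c * Gf l1 l2 c th phi u) u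
                 (D * (D * Bf l1 l2 (phi u)) + c * g u)).
  { intro u. apply (is_derive_plus (fun u => D * f u) (fun u => c * Gf l1 l2 c th phi u)).
    - apply is_derive_scal. apply hf.
    - apply is_derive_scal. apply G_derive; auto. }
  assert (hneg : forall u, D * (D * Bf l1 l2 (phi u)) + c * g u < 0).
  { intro u. unfold g. set (B := Bf l1 l2 (phi u)).
    assert (hB := Bf_bounds l1 l2 (phi u) hl). fold B in hB.
    assert (hB0 : 0 < B) by nra.
    assert (hk := key_ineq c D B l1 (cos th) hc ltac:(lra) hD h).
    unfold phi_rhs. fold D. fold B.
    set (a := c ^ 2 + 2 * cos th * B - D ^ 2 * B ^ 2) in *.
    assert (ha : 0 < a).
    { assert (0 <= (c ^ 2 + D ^ 2 * B ^ 2) ^ 2) by nra.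
      assert (0 < c ^ 2) by nra. nra. }
    assert (hs := sqrt_sqrt a ltac:(lra)). assert (hp := sqrt_pos a).
    set (r := sqrt a) in *.
    assert (hcr : c * r > c ^ 2 + D ^ 2 * B ^ 2).
    { destruct (Rle_or_lt (c * r) (c ^ 2 + D ^ 2 * B ^ 2)) as [h'|h']; [|lra].
      exfalso. assert (0 <= D ^ 2 * B ^ 2) by nra.
      assert (0 <= c * r) by nra.
      assert ((c * r) ^ 2 <= (c ^ 2 + D ^ 2 * B ^ 2) ^ 2) by (apply pow_incr; lra).
      nra. }
    apply (Rmult_lt_reg_r B); [lra|].
    replace ((D * (D * B) + c * ((c - r) / B)) * B) with (D ^ 2 * B ^ 2 + c ^ 2 - c * r)
      by (field; lra). lra. }
  assert (hlt := mvt_neg _ _ 0 U hh hneg hU).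
  simpl in hlt. unfold Hf in hH. fold D in hH.
  rewrite hf0 in hlt. unfold Gf at 2 in hlt. rewrite RInt_point in hlt.
  change (@zero R_CompleteNormedModule) with 0 in hlt. lra.
Qed.

Lemma inv_c c : 1 <= c -> 0 < / c <= 1 /\ c * / c = 1.
Proof. intro h. split; [split|].
  - apply Rinv_0_lt_compat; lra.
  - rewrite <- Rinv_1. apply Rinv_le_contravar; lra.
  - field; lra. Qed.

Lemma sq_div M a c : 1 <= c -> 0 <= M -> 0 <= a -> M / c * (a / c) <= M * a / c.
Proof. intros h hM ha. destruct (inv_c c h) as [[h1 h2] h3]. unfold Rdiv.
  set (i := / c) in *. assert (0 <= M * a) by nra.
  assert (0 <= M * a * i) by nra.
  replace (M * i * (a * i)) with ((M * a * i) * i) by ring. nra. Qed.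

Lemma Rabs_ut c ut : 0 < c -> Rabs (ut / c - 0) = Rabs ut / c.
Proof. intro h. rewrite Rminus_0_r. unfold Rdiv. rewrite Rabs_mult, Rabs_inv, (Rabs_pos_eq c); lra. Qed.

Lemma D_bound c th : 0 < c -> Rabs (Dc c th) <= 1 / c.
Proof. intro h. unfold Dc, Rdiv. rewrite Rabs_mult, Rabs_inv, (Rabs_pos_eq c) by lra.
  assert (hs := SIN_bound th). assert (0 < / c) by (apply Rinv_0_lt_compat; lra).
  assert (Rabs (sin th) <= 1) by (apply Rabs_le; lra). nra. Qed.

Lemma e_bound l1 l2 c th y : 0 < l2 <= l1 -> 1 <= c -> 0 < cos th ->
  Rabs (2 * cos th * Bf l1 l2 y - Dc c th ^ 2 * Bf l1 l2 y ^ 2)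
  <= 2 * cos th * l1 ^ 2 + (l1 ^ 2) ^ 2 / c ^ 2.
Proof.
  intros hl hc hcos. assert (hB := Bf_bounds l1 l2 y hl).
  set (B := Bf l1 l2 y) in *. assert (hD := D_bound c th ltac:(lra)).
  set (D := Dc c th) in *.
  assert (hD2 : D ^ 2 <= 1 / c ^ 2).
  { replace (D ^ 2) with (Rabs D ^ 2).
    2:{ simpl. rewrite Rmult_1_r, <- Rabs_mult, Rabs_pos_eq; [ring|nra]. }
    replace (1 / c ^ 2) with ((1 / c) ^ 2) by (field; lra).
    apply pow_incr; split; [apply Rabs_pos|exact hD]. }
  assert (0 <= D ^ 2) by apply pow2_ge_0.
  assert (hB2 : B ^ 2 <= (l1 ^ 2) ^ 2) by (apply pow_incr; nra).
  assert (0 <= B ^ 2) by apply pow2_ge_0.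
  assert (h1 : D ^ 2 * B ^ 2 <= (l1 ^ 2) ^ 2 / c ^ 2).
  { unfold Rdiv. assert (0 < / c ^ 2) by (apply Rinv_0_lt_compat; nra).
    replace (1 / c ^ 2) with (/ c ^ 2) in hD2 by (field; lra).
    assert (0 <= (l1^2)^2) by apply pow2_ge_0. nra. }
  apply Rabs_le. split.
  - assert (0 <= 2 * cos th * B) by nra. assert (0 <= 2 * cos th * l1 ^ 2) by nra.
    assert (0 <= (l1 ^ 2) ^ 2 / c ^ 2) by (unfold Rdiv; apply Rmult_le_pos; [apply pow2_ge_0| apply Rlt_le, Rinv_0_lt_compat; nra]).
    nra.
  - assert (2 * cos th * B <= 2 * cos th * l1 ^ 2) by nra. nra.
Qed.

Lemma data_cos l1 l2 c th phi f U : 0 < l2 <= l1 -> 1 <= c ->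
  catenoid_data l1 l2 c th phi f U ->
  0 < cos th /\ 2 * cos th * c ^ 2 <= 3 * l1 ^ 2 + l1 ^ 6.
Proof.
  intros hl hc hd. assert (hb := cos_bound l1 l2 c th phi f U hl ltac:(lra) hd).
  destruct hd as [hth0 [hth1 _]].
  assert (hcos : 0 < cos th) by (apply cos_gt_0; assert (h := PI_RGT_0); lra).
  split; [exact hcos|].
  assert (hc4 : 1 <= c ^ 4).
  { replace 1 with (1 ^ 4) by ring. apply pow_incr; lra. }
  assert (0 <= l1 ^ 6) by (replace (l1 ^ 6) with ((l1 ^ 3) ^ 2) by ring; apply pow2_ge_0).
  assert (0 <= l1 ^ 2) by apply pow2_ge_0.
  assert (h2 : c ^ 4 * (2 * cos th * c ^ 2) <= c ^ 4 * (3 * l1 ^ 2 + l1 ^ 6)).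
  { replace (c ^ 4 * (2 * cos th * c ^ 2)) with (2 * cos th * c ^ 6) by ring. nra. }
  apply Rmult_le_reg_l in h2; lra.
Qed.

Lemma data_phi l1 l2 c th phi f U ut : 0 < l2 <= l1 -> 1 <= c ->
  catenoid_data l1 l2 c th phi f U ->
  Rabs (phi (ut / c) - ut) <= (2 * l1 ^ 2 + (l1 ^ 2) ^ 2) * Rabs ut / c.
Proof.
  intros hl hc hd. destruct (data_cos _ _ _ _ _ _ _ hl hc hd) as [hcos _].
  destruct hd as [_ [_ [_ [hphi [hphi0 _]]]]].
  set (E0 := 2 * l1 ^ 2 + (l1 ^ 2) ^ 2).
  assert (hE0 : 0 <= E0) by (unfold E0; assert (0 <= l1 ^ 2) by apply pow2_ge_0; nra).
  assert (hm := mvt_bound (fun x => phi x - c * x) (fun x => phi_rhs l1 l2 c th (phi x) - c)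
                  0 (ut / c) (E0 / c)).
  simpl in hm.
  assert (heq : phi (ut / c) - c * (ut / c) - (phi 0 - c * 0) = phi (ut / c) - ut)
    by (rewrite hphi0; field; lra).
  rewrite heq, Rabs_ut in hm by lra.
  eapply Rle_trans; [apply hm| apply sq_div; auto; apply Rabs_pos].
  - intro x. apply (is_derive_minus phi (fun x => c * x)). apply hphi.
    auto_derive; auto; ring.
  - intro x. unfold phi_rhs.
    set (B := Bf l1 l2 (phi x)).
    replace (c ^ 2 + 2 * cos th * B - Dc c th ^ 2 * B ^ 2)
      with (c ^ 2 + (2 * cos th * B - Dc c th ^ 2 * B ^ 2)) by ring.
    eapply Rle_trans; [apply sqrt_approx; lra|].
    unfold Rdiv. apply Rmult_le_compat_r; [apply Rlt_le, Rinv_0_lt_compat; lra|].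
    eapply Rle_trans; [apply e_bound; auto|].
    assert (hcs := COS_bound th).
    assert (0 <= (l1 ^ 2) ^ 2) by apply pow2_ge_0.
    assert (0 <= l1 ^ 2) by apply pow2_ge_0.
    assert ((l1 ^ 2) ^ 2 / c ^ 2 <= (l1 ^ 2) ^ 2).
    { assert (1 <= c ^ 2) by nra. apply Rle_div_l; [nra|]. nra. }
    unfold E0. nra.
Qed.

Lemma rhs_bound l1 l2 c th y : 0 < l2 <= l1 -> 1 <= c -> 0 < cos th ->
  Rabs (phi_rhs l1 l2 c th y - c) <= (2 * l1 ^ 2 + (l1 ^ 2) ^ 2) / c.
Proof.
  intros hl hc hcos. unfold phi_rhs.
  set (B := Bf l1 l2 y).
  replace (c ^ 2 + 2 * cos th * B - Dc c th ^ 2 * B ^ 2)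
    with (c ^ 2 + (2 * cos th * B - Dc c th ^ 2 * B ^ 2)) by ring.
  eapply Rle_trans; [apply sqrt_approx; lra|].
  unfold Rdiv. apply Rmult_le_compat_r; [apply Rlt_le, Rinv_0_lt_compat; lra|].
  eapply Rle_trans; [apply e_bound; auto|].
  assert (hcs := COS_bound th).
  assert (0 <= (l1 ^ 2) ^ 2) by apply pow2_ge_0.
  assert (0 <= l1 ^ 2) by apply pow2_ge_0.
  assert ((l1 ^ 2) ^ 2 / c ^ 2 <= (l1 ^ 2) ^ 2).
  { assert (1 <= c ^ 2) by nra. apply Rle_div_l; [nra|]. nra. }
  nra.
Qed.

Lemma data_w l1 l2 c th phi f U y : 0 < l2 <= l1 -> 1 <= c ->
  catenoid_data l1 l2 c th phi f U ->
  Rabs (c * (c - phi_rhs l1 l2 c th y)) <= ((3 * l1 ^ 2 + l1 ^ 6) * l1 ^ 2 + (l1 ^ 2) ^ 2) / c.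
Proof.
  intros hl hc hd. destruct (data_cos _ _ _ _ _ _ _ hl hc hd) as [hcos hcb].
  unfold phi_rhs. set (B := Bf l1 l2 y).
  replace (c ^ 2 + 2 * cos th * B - Dc c th ^ 2 * B ^ 2)
    with (c ^ 2 + (2 * cos th * B - Dc c th ^ 2 * B ^ 2)) by ring.
  assert (hs := sqrt_approx c (2 * cos th * B - Dc c th ^ 2 * B ^ 2) ltac:(lra)).
  assert (he := e_bound l1 l2 c th y hl hc hcos). fold B in he.
  set (r := sqrt _) in *. set (e := 2 * cos th * B - Dc c th ^ 2 * B ^ 2) in *.
  rewrite Rabs_mult, Rabs_pos_eq by lra.
  replace (c - r) with (- (r - c)) by ring. rewrite Rabs_Ropp.
  assert (h1 : c * Rabs (r - c) <= Rabs e).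
  { apply Rle_div_r in hs; [|lra]. lra. }
  assert (0 <= l1 ^ 2) by apply pow2_ge_0.
  assert (0 <= (l1 ^ 2) ^ 2) by apply pow2_ge_0.
  apply (Rle_div_r _ _ c (Rlt_gt 0 c ltac:(lra))).
  assert (hc2 : 0 < c ^ 2) by nra.
  assert (h2 : Rabs e * c ^ 2 <= (3 * l1 ^ 2 + l1 ^ 6) * l1 ^ 2 + (l1 ^ 2) ^ 2).
  { assert (Rabs e * c ^ 2 <= (2 * cos th * l1 ^ 2 + (l1 ^ 2) ^ 2 / c ^ 2) * c ^ 2) by nra.
    replace ((2 * cos th * l1 ^ 2 + (l1 ^ 2) ^ 2 / c ^ 2) * c ^ 2)
      with ((2 * cos th * c ^ 2) * l1 ^ 2 + (l1 ^ 2) ^ 2) in H1 by (field; lra).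
    nra. }
  assert (0 <= Rabs (r - c)) by apply Rabs_pos.
  assert (c * Rabs (r - c) * c <= Rabs e * c ^ 2).
  { assert (c * Rabs (r - c) * c <= Rabs e * c) by nra. assert (0 <= Rabs e) by apply Rabs_pos. assert (c <= c ^ 2) by nra. nra. }
  lra.
Qed.

Lemma data_sin l1 l2 c th phi f U : 0 < l2 <= l1 -> 1 <= c ->
  catenoid_data l1 l2 c th phi f U ->
  Rabs (cos th) <= (3 * l1 ^ 2 + l1 ^ 6) / c /\ Rabs (sin th - 1) <= (3 * l1 ^ 2 + l1 ^ 6) / c.
Proof.
  intros hl hc hd. destruct (data_cos _ _ _ _ _ _ _ hl hc hd) as [hcos hcb].
  destruct hd as [hth0 [hth1 _]].
  assert (hsin : 0 < sin th) by (apply sin_gt_0; assert (h := PI_RGT_0); lra).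
  assert (hs := SIN_bound th). assert (hcs := COS_bound th).
  assert (hsc := sin2_cos2 th). unfold Rsqr in hsc.
  assert (hc1 : Rabs (cos th) <= (3 * l1 ^ 2 + l1 ^ 6) / c).
  { rewrite Rabs_pos_eq by lra. apply (Rle_div_r _ _ c (Rlt_gt 0 c ltac:(lra))).
    assert (c <= c ^ 2) by nra. assert (cos th * c <= cos th * c ^ 2) by nra. assert (0 < cos th * c ^ 2) by nra. lra. }
  split; [exact hc1|].
  rewrite Rabs_pos_eq in hc1 by lra.
  eapply Rle_trans; [|exact hc1].
  rewrite Rabs_left1 by lra. nra.
Qed.

Lemma data_f l1 l2 c th phi f U ut : 0 < l2 <= l1 -> 1 <= c ->
  catenoid_data l1 l2 c th phi f U ->
  Rabs (f (ut / c)) <= l1 ^ 2 * Rabs ut / c.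
Proof.
  intros hl hc hd.
  destruct hd as [_ [_ [_ [_ [_ [hf [hf0 _]]]]]]].
  assert (hm := mvt_bound f (fun x => Dc c th * Bf l1 l2 (phi x)) 0 (ut / c) (l1 ^ 2 / c) hf).
  rewrite hf0, Rminus_0_r, Rabs_ut in hm by lra.
  eapply Rle_trans; [apply hm| apply sq_div; auto; [apply pow2_ge_0|apply Rabs_pos]].
  intro x. rewrite Rabs_mult. assert (hD := D_bound c th ltac:(lra)).
  assert (hB := Bf_bounds l1 l2 (phi x) hl).
  rewrite (Rabs_pos_eq (Bf _ _ _)) by nra.
  replace (l1 ^ 2 / c) with (1 / c * l1 ^ 2) by (field; lra).
  apply Rmult_le_compat; auto using Rabs_pos; nra.
Qed.

Lemma data_G l1 l2 c th phi f U ut : 0 < l2 <= l1 -> 1 <= c ->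
  catenoid_data l1 l2 c th phi f U ->
  Rabs (Gf l1 l2 c th phi (ut / c)) <= (2 * l1 ^ 2 + (l1 ^ 2) ^ 2) / l2 ^ 2 * Rabs ut / c.
Proof.
  intros hl hc hd. destruct (data_cos _ _ _ _ _ _ _ hl hc hd) as [hcos _].
  destruct hd as [_ [_ [_ [hphi _]]]].
  assert (hdphi : forall u, ex_derive phi u) by (intro u; eexists; apply hphi).
  set (E0 := 2 * l1 ^ 2 + (l1 ^ 2) ^ 2).
  assert (hE0 : 0 <= E0) by (unfold E0; assert (0 <= l1 ^ 2) by apply pow2_ge_0; nra).
  assert (hl2 : 0 < l2 ^ 2) by nra.
  assert (hm := mvt_bound _ _ 0 (ut / c) (E0 / l2 ^ 2 / c) (G_derive l1 l2 c th phi hl hdphi)).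
  unfold Gf at 2 in hm. rewrite RInt_point in hm.
  change (@zero R_CompleteNormedModule) with 0 in hm.
  rewrite Rminus_0_r, Rabs_ut in hm by lra.
  eapply Rle_trans; [apply hm| apply sq_div; auto; [|apply Rabs_pos]].
  2: { unfold Rdiv. apply Rmult_le_pos; [lra| apply Rlt_le, Rinv_0_lt_compat; lra]. }
  intro x. assert (hr := rhs_bound l1 l2 c th (phi x) hl hc hcos). fold E0 in hr.
  assert (hB := Bf_bounds l1 l2 (phi x) hl).
  unfold Rdiv at 1. rewrite Rabs_mult, Rabs_inv, (Rabs_pos_eq (Bf _ _ _)) by nra.
  replace (c - phi_rhs l1 l2 c th (phi x)) with (- (phi_rhs l1 l2 c th (phi x) - c)) by ring.
  rewrite Rabs_Ropp.
  replace (E0 / l2 ^ 2 / c) with (E0 / c * / l2 ^ 2) by (field; lra).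
  apply Rmult_le_compat; auto using Rabs_pos.
  - apply Rlt_le, Rinv_0_lt_compat; nra.
  - apply Rinv_le_contravar; nra.
Qed.

Lemma Dv_bound c th vt : 1 <= c ->
  Rabs (Dc c th * ((2 * ln c + vt) / c)) <= (2 + Rabs vt) / c.
Proof.
  intro hc. rewrite Rabs_mult. assert (hD := D_bound c th ltac:(lra)).
  destruct (ln_bound c hc) as [hl0 hl1].
  destruct (inv_c c hc) as [[h1 h2] h3].
  assert (hv : Rabs ((2 * ln c + vt) / c) <= (2 * c + Rabs vt) / c).
  { unfold Rdiv. rewrite Rabs_mult, (Rabs_pos_eq (/ c)) by lra.
    apply Rmult_le_compat_r; [lra|].
    eapply Rle_trans; [apply Rabs_triang|]. rewrite Rabs_pos_eq by lra. lra. }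
  unfold Rdiv in *. set (i := / c) in *.
  assert (0 <= Rabs vt) by apply Rabs_pos.
  assert (hx : Rabs (Dc c th) * Rabs ((2 * ln c + vt) * i) <= 1 * i * ((2 * c + Rabs vt) * i)).
  { apply Rmult_le_compat; auto using Rabs_pos. }
  assert (Rabs vt * i * i <= Rabs vt * i).
  { assert (0 <= Rabs vt * i) by nra. nra. }
  replace (1 * i * ((2 * c + Rabs vt) * i)) with (2 * (c * i) * i + Rabs vt * i * i) in hx by ring.
  rewrite h3 in hx. nra.
Qed.

Lemma data_X3 l1 l2 c th phi f U ut vt : 0 < l2 <= l1 -> 1 <= c ->
  catenoid_data l1 l2 c th phi f U ->
  Rabs (X3 l1 l2 c th phi (ut / c) ((2 * ln c + vt) / c)) <=
  (l1 * l2 * (2 + Rabs vt) + l1 * l2 * ((2 * l1 ^ 2 + (l1 ^ 2) ^ 2) / l2 ^ 2 * Rabs ut)) / c.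
Proof.
  intros hl hc hd. assert (hG := data_G _ _ _ _ _ _ _ ut hl hc hd).
  assert (hDv := Dv_bound c th vt hc).
  unfold X3.
  replace (- l1 * l2 * Dc c th * ((2 * ln c + vt) / c) + l1 * l2 * Gf l1 l2 c th phi (ut / c))
    with (l1 * l2 * (- (Dc c th * ((2 * ln c + vt) / c)) + Gf l1 l2 c th phi (ut / c))) by ring.
  rewrite Rabs_mult, (Rabs_pos_eq (l1 * l2)) by nra.
  assert (hk : 0 < l1 * l2) by nra.
  eapply Rle_trans.
  { apply Rmult_le_compat_l; [lra|]. eapply Rle_trans; [apply Rabs_triang|].
    rewrite Rabs_Ropp. apply Rplus_le_compat; [exact hDv| exact hG]. }
  apply Req_le. field. lra.
Qed.

Lemma Lreal (f : R -> R) (a b : R) : is_lim f p_infty a -> a = b -> is_lim f p_infty b.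
Proof. intros h e; subst; exact h. Qed.

Lemma Lm (f g : R -> R) (a b : R) : is_lim f p_infty a -> is_lim g p_infty b ->
  is_lim (fun x => f x * g x) p_infty (a * b).
Proof. intros hf hg. apply (is_lim_mult f g p_infty a b hf hg). simpl; exact I. Qed.

Lemma Lp (f g : R -> R) (a b : R) : is_lim f p_infty a -> is_lim g p_infty b ->
  is_lim (fun x => f x + g x) p_infty (a + b).
Proof. intros hf hg. apply (is_lim_plus' f g p_infty a b hf hg). Qed.

Lemma Lo (f : R -> R) (a : R) : is_lim f p_infty a -> is_lim (fun x => - f x) p_infty (- a).
Proof. intros hf. apply (is_lim_opp f p_infty a hf). Qed.

Lemma Ls (f g : R -> R) (a b : R) : is_lim f p_infty a -> is_lim g p_infty b ->
  is_lim (fun x => f x - g x) p_infty (a - b).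
Proof. intros hf hg. apply (Lp f (fun x => - g x)); [exact hf| apply Lo, hg]. Qed.

Lemma Li (f : R -> R) (a : R) : is_lim f p_infty a -> a <> 0 ->
  is_lim (fun x => / f x) p_infty (/ a).
Proof. intros hf ha. apply (is_lim_inv f p_infty a hf). intro h; apply ha. injection h; auto. Qed.

Lemma Ld (f g : R -> R) (a b : R) : is_lim f p_infty a -> is_lim g p_infty b -> b <> 0 ->
  is_lim (fun x => f x / g x) p_infty (a / b).
Proof. intros hf hg hb. apply (Lm f (fun x => / g x)); [exact hf| apply Li; auto]. Qed.

Lemma Lc (a : R) : is_lim (fun _ => a) p_infty a.
Proof. apply is_lim_const. Qed.

Lemma Lcont (g : R -> R) (f : R -> R) (a : R) : (forall y, continuous g y) ->
  is_lim f p_infty a -> is_lim (fun x => g (f x)) p_infty (g a).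
Proof. intros hg hf. apply (is_lim_comp_continuous f g p_infty a hf (hg a)). Qed.

Lemma Lcos (f : R -> R) (a : R) : is_lim f p_infty a -> is_lim (fun x => cos (f x)) p_infty (cos a).
Proof. apply Lcont. apply continuous_cos. Qed.

Lemma Lsin (f : R -> R) (a : R) : is_lim f p_infty a -> is_lim (fun x => sin (f x)) p_infty (sin a).
Proof. apply Lcont. apply continuous_sin. Qed.

Lemma Lexp (f : R -> R) (a : R) : is_lim f p_infty a -> is_lim (fun x => exp (f x)) p_infty (exp a).
Proof. apply Lcont. intro y. apply (@ex_derive_continuous R_AbsRing R_NormedModule).
  auto_derive; auto. Qed.

Lemma Lpow (f : R -> R) (a : R) (n : nat) : is_lim f p_infty a -> is_lim (fun x => f x ^ n) p_infty (a ^ n).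
Proof. intro hf. induction n as [|n IH]; simpl.
  - apply Lc.
  - apply (Lm f (fun x => f x ^ n)); auto. Qed.

Lemma Linv0 : is_lim (fun c => / c) p_infty 0.
Proof. apply (is_lim_inv (fun y => y) p_infty p_infty (is_lim_id _)). discriminate. Qed.

Lemma lim_bound (g : R -> R) l K : (forall c, 1 <= c -> Rabs (g c - l) <= K / c) ->
  is_lim g p_infty l.
Proof.
  intro hb.
  apply (is_lim_le_le_loc (fun c => l - K * / c) (fun c => l + K * / c)).
  - exists 1. intros y hy. specialize (hb y ltac:(lra)). apply Rabs_le_between in hb.
    unfold Rdiv in hb. lra.
  - apply (Lreal _ (l - K * 0)); [|ring]. apply Ls; [apply Lc| apply Lm; [apply Lc| apply Linv0]].
  - apply (Lreal _ (l + K * 0)); [|ring]. apply Lp; [apply Lc| apply Lm; [apply Lc| apply Linv0]].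
Qed.

Definition chF q ic := (exp q + exp (- q) * ic ^ 4) / 2.
Definition shF q ic := (exp q - exp (- q) * ic ^ 4) / 2.

Definition F1 l1 l2 s p x w q ic :=
  let ch := chF q ic in let sh := shF q ic in let kd := l1 * l2 * s * ic ^ 2 in
  let b := Bf l1 l2 p in let Q := 1 + l1 ^ 2 * l2 ^ 2 * s ^ 2 * ic ^ 4 in
  - / (Q * b) * ( / l1 * s * b * cos p * (cos x * ch - kd * sin x * sh)
                - / l1 * w * sin p * (cos x * sh - kd * sin x * ch)
                - / l2 * w * cos p * (sin x * sh + kd * cos x * ch)
                - / l2 * s * b * sin p * (sin x * ch + kd * cos x * sh)).

Definition F2 l1 l2 s p x w q ic :=
  let ch := chF q ic in let sh := shF q ic in let kd := l1 * l2 * s * ic ^ 2 in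
  let b := Bf l1 l2 p in let Q := 1 + l1 ^ 2 * l2 ^ 2 * s ^ 2 * ic ^ 4 in
  - / (Q * b) * ( / l1 * s * b * cos p * (sin x * ch + kd * cos x * sh)
                - / l1 * w * sin p * (sin x * sh + kd * cos x * ch)
                + / l2 * w * cos p * (cos x * sh - kd * sin x * ch)
                + / l2 * s * b * sin p * (cos x * ch - kd * sin x * sh)).

Lemma hyp_form c A q : 0 < c -> A = q + 2 * ln c ->
  cosh A = c ^ 2 * chF q (/ c) /\ sinh A = c ^ 2 * shF q (/ c).
Proof.
  intros hc hA.
  assert (e1 : exp A = exp q * c ^ 2).
  { rewrite hA, exp_plus. replace (2 * ln c) with (ln c + ln c) by ring.
    rewrite exp_plus, exp_ln by lra. ring. }
  assert (e2 : exp (- A) = exp (- q) * / c ^ 2).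
  { rewrite exp_Ropp, e1, exp_Ropp. field. split; [lra|]. apply Rgt_not_eq, exp_pos. }
  unfold cosh, sinh, chF, shF. rewrite e1, e2. split; field; lra.
Qed.

Lemma X1_form l1 l2 c th phi f u v q : 0 < l2 <= l1 -> 0 < c -> Af c f u v = q + 2 * ln c ->
  X1 l1 l2 c th phi f u v =
  F1 l1 l2 (sin th) (phi u) (X3 l1 l2 c th phi u v) (c * (c - phi_rhs l1 l2 c th (phi u))) q (/ c).
Proof.
  intros hl hc hA. destruct (hyp_form c _ q hc hA) as [hch hsh].
  unfold X1, M1, M2, M3, M4, F1. cbv zeta. rewrite hch, hsh.
  assert (hB := Bf_pos l1 l2 (phi u) hl).
  set (x := X3 l1 l2 c th phi u v). set (r := phi_rhs l1 l2 c th (phi u)).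
  set (B := Bf l1 l2 (phi u)). set (ch := chF q (/ c)). set (sh := shF q (/ c)).
  unfold Dc.
  assert (hQ : 0 < 1 + l1 ^ 2 * l2 ^ 2 * sin th ^ 2 * (/ c) ^ 4).
  { assert (0 <= l1 ^ 2 * l2 ^ 2 * sin th ^ 2 * (/ c) ^ 4).
    { replace (l1 ^ 2 * l2 ^ 2 * sin th ^ 2 * (/ c) ^ 4) with ((l1 * l2 * sin th * (/ c) ^ 2) ^ 2) by ring.
      apply pow2_ge_0. }
    lra. }
  assert (hQ' : c ^ 2 + l1 ^ 2 * l2 ^ 2 * (sin th / c) ^ 2 = c ^ 2 * (1 + l1 ^ 2 * l2 ^ 2 * sin th ^ 2 * (/ c) ^ 4)) by (field; lra).
  rewrite hQ'.
  field. assert (0 < c ^ 4) by (apply pow_lt; lra).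
  assert (0 <= (l1 * l2 * sin th) ^ 2) by apply pow2_ge_0. unfold B. repeat split; lra.
Qed.

Lemma X2_form l1 l2 c th phi f u v q : 0 < l2 <= l1 -> 0 < c -> Af c f u v = q + 2 * ln c ->
  X2 l1 l2 c th phi f u v =
  F2 l1 l2 (sin th) (phi u) (X3 l1 l2 c th phi u v) (c * (c - phi_rhs l1 l2 c th (phi u))) q (/ c).
Proof.
  intros hl hc hA. destruct (hyp_form c _ q hc hA) as [hch hsh].
  unfold X2, M1, M2, M3, M4, F2. cbv zeta. rewrite hch, hsh.
  assert (hB := Bf_pos l1 l2 (phi u) hl).
  set (x := X3 l1 l2 c th phi u v). set (r := phi_rhs l1 l2 c th (phi u)).
  set (B := Bf l1 l2 (phi u)). set (ch := chF q (/ c)). set (sh := shF q (/ c)).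
  unfold Dc.
  assert (hQ : 0 < 1 + l1 ^ 2 * l2 ^ 2 * sin th ^ 2 * (/ c) ^ 4).
  { assert (0 <= l1 ^ 2 * l2 ^ 2 * sin th ^ 2 * (/ c) ^ 4).
    { replace (l1 ^ 2 * l2 ^ 2 * sin th ^ 2 * (/ c) ^ 4) with ((l1 * l2 * sin th * (/ c) ^ 2) ^ 2) by ring.
      apply pow2_ge_0. }
    lra. }
  assert (hQ' : c ^ 2 + l1 ^ 2 * l2 ^ 2 * (sin th / c) ^ 2 = c ^ 2 * (1 + l1 ^ 2 * l2 ^ 2 * sin th ^ 2 * (/ c) ^ 4)) by (field; lra).
  rewrite hQ'.
  field. assert (0 < c ^ 4) by (apply pow_lt; lra).
  assert (0 <= (l1 * l2 * sin th) ^ 2) by apply pow2_ge_0. unfold B. repeat split; lra.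
Qed.

Ltac Lstep := first [ eassumption | apply Lc | apply Lcos | apply Lsin | apply Lexp | apply Lpow
  | apply Ls | apply Ld | apply Lo | apply Li | apply Lm | apply Lp ].
Ltac Ltac_lim := repeat (match goal with |- is_lim _ _ _ => Lstep end).

Lemma F_lim l1 l2 (s p x w q ic : R -> R) (ut vt : R) : 0 < l2 <= l1 ->
  is_lim s p_infty 1 -> is_lim p p_infty ut -> is_lim x p_infty 0 ->
  is_lim w p_infty 0 -> is_lim q p_infty vt -> is_lim ic p_infty 0 ->
  is_lim (fun c => F1 l1 l2 (s c) (p c) (x c) (w c) (q c) (ic c)) p_infty (- / (2 * l1) * cos ut * exp vt) /\
  is_lim (fun c => F2 l1 l2 (s c) (p c) (x c) (w c) (q c) (ic c)) p_infty (- / (2 * l2) * sin ut * exp vt).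
Proof.
  intros hl hs hp hx hw hq hic. assert (hB := Bf_pos l1 l2 ut hl). unfold Bf in hB.
  split.
  - unfold F1, chF, shF, Bf. cbv zeta. eapply Lreal. Ltac_lim.
    all: try (rewrite cos_0, sin_0; simpl; field; lra).
    all: try lra.
  - unfold F2, chF, shF, Bf. cbv zeta. eapply Lreal. Ltac_lim.
    all: try (rewrite cos_0, sin_0; simpl; field; lra).
    all: try lra.
Qed.

Theorem proposition6p1 (l1 l2 : R)
  (hl : (l1 > l2 /\ l2 > 0) \/ (l1 = 1 /\ l2 = 1))
  (th : R -> R) (phi f : R -> R -> R) (U : R -> R)
  (hdata : forall c, 0 < c -> catenoid_data l1 l2 c (th c) (phi c) (f c) (U c))
  (ut vt : R) :
  let uc := fun c => ut / c in
  let vc := fun c => (2 * ln c + vt) / c in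
  is_lim (fun c => X1 l1 l2 c (th c) (phi c) (f c) (uc c) (vc c)) p_infty
    (- / (2 * l1) * cos ut * exp vt) /\
  is_lim (fun c => X2 l1 l2 c (th c) (phi c) (f c) (uc c) (vc c)) p_infty
    (- / (2 * l2) * sin ut * exp vt) /\
  is_lim (fun c => X3 l1 l2 c (th c) (phi c) (uc c) (vc c)) p_infty 0.
Proof.
  intros uc vc. unfold uc, vc. clear uc vc.
  assert (hl' : 0 < l2 <= l1) by (destruct hl; lra).
  assert (hd : forall c, 1 <= c -> catenoid_data l1 l2 c (th c) (phi c) (f c) (U c))
    by (intros c hc; apply hdata; lra).
  assert (hs : is_lim (fun c => sin (th c)) p_infty 1).
  { apply (lim_bound _ _ (3 * l1 ^ 2 + l1 ^ 6)). intros c hc.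
    apply (data_sin _ _ _ _ _ _ _ hl' hc (hd c hc)). }
  assert (hp : is_lim (fun c => phi c (ut / c)) p_infty ut).
  { apply (lim_bound _ _ ((2 * l1 ^ 2 + (l1 ^ 2) ^ 2) * Rabs ut)). intros c hc.
    apply (data_phi _ _ _ _ _ _ _ ut hl' hc (hd c hc)). }
  assert (hx : is_lim (fun c => X3 l1 l2 c (th c) (phi c) (ut / c) ((2 * ln c + vt) / c)) p_infty 0).
  { apply (lim_bound _ _ (l1 * l2 * (2 + Rabs vt) + l1 * l2 * ((2 * l1 ^ 2 + (l1 ^ 2) ^ 2) / l2 ^ 2 * Rabs ut))).
    intros c hc. rewrite Rminus_0_r.
    apply (data_X3 _ _ _ _ _ _ _ ut vt hl' hc (hd c hc)). }
  assert (hw : is_lim (fun c => c * (c - phi_rhs l1 l2 c (th c) (phi c (ut / c)))) p_infty 0).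
  { apply (lim_bound _ _ ((3 * l1 ^ 2 + l1 ^ 6) * l1 ^ 2 + (l1 ^ 2) ^ 2)).
    intros c hc. rewrite Rminus_0_r.
    apply (data_w _ _ _ _ _ _ _ _ hl' hc (hd c hc)). }
  assert (hq : is_lim (fun c => f c (ut / c) + vt) p_infty vt).
  { apply (lim_bound _ _ (l1 ^ 2 * Rabs ut)). intros c hc.
    replace (f c (ut / c) + vt - vt) with (f c (ut / c)) by ring.
    apply (data_f _ _ _ _ _ _ _ ut hl' hc (hd c hc)). }
  destruct (F_lim l1 l2 _ _ _ _ _ _ ut vt hl' hs hp hx hw hq Linv0) as [h1 h2].
  assert (hA : forall c, 1 <= c -> Af c (f c) (ut / c) ((2 * ln c + vt) / c) = (f c (ut / c) + vt) + 2 * ln c).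
  { intros c hc. unfold Af. field. lra. }
  split; [|split; [|exact hx]].
  - eapply is_lim_ext_loc; [|exact h1]. exists 1. intros c hc. simpl.
    symmetry. apply X1_form; [exact hl'|lra|apply hA; lra].
  - eapply is_lim_ext_loc; [|exact h2]. exists 1. intros c hc. simpl.
    symmetry. apply X2_form; [exact hl'|lra|apply hA; lra].
Qed.
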